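(* Let $\mathcal{I}=(N,M,\mathcal{V})$ be an ordered instance with $n$ agents and goods $M=[m]$, and let $i\in N$. (1) If $g_1\ge 2n-1$, $g_2\ge 2n$ and $g_3\ge 2n+1$ are goods, then $\mathrm{MMS}^{n-1}_{v_i}(M\setminus\{g_1,g_2,g_3\})\ge\mathrm{MMS}^n_{v_i}(M)$. (2) If $g_1\ge 3n-2$, $g_2\ge 3n-1$, $g_3\ge 3n$ and $g_4\ge 3n+1$ are goods, then $\mathrm{MMS}^{n-1}_{v_i}(M\setminus\{g_1,g_2,g_3,g_4\})\ge\mathrm{MMS}^n_{v_i}(M)$.
   Context: Valuations are additive; the instance is ordered if $v_i(1)\ge v_i(2)\ge\dots\ge v_i(m)$ for all agents $i$. $\mathrm{MMS}^d_v(S)$ is the maximum over all partitions of $S$ into $d$ (possibly empty) bundles of the minimum bundle value under $v$. *)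

(* Defs.v *)
From HB Require Import structures.
From mathcomp Require Import all_boot all_order all_algebra.
Set Implicit Arguments. Unset Strict Implicit. Unset Printing Implicit Defensive.
Import Order.TTheory GRing.Theory Num.Theory.
Local Open Scope ring_scope.

(* Goods M = [m] are represented by 'I_m : the ordinal g stands for good g+1.
   Agents are 'I_n.  Valuations are additive: given by values of single goods. *)

(* Minimum / maximum of a finite nonempty list (default 0 on the empty list,
   which is never used in the statement since all lists involved are nonempty). *)
Definition seqmin (R : realDomainType) (l : seq R) : R :=
  foldr Num.min (head 0 l) (behead l).
Definition seqmax (R : realDomainType) (l : seq R) : R :=
  foldr Num.max (head 0 l) (behead l).

Definition bval (R : realDomainType) (m : nat) (v : 'I_m -> R) (S : {set 'I_m}) : R :=
  \sum_(g in S) v g.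

(* A partition of S into d (possibly empty) bundles is given by an assignment
   f : 'I_m -> 'I_d (only goods of S matter); bundle j is [set g in S | f g == j]. *)
Definition bundle (m d : nat) (S : {set 'I_m}) (f : {ffun 'I_m -> 'I_d}) (j : 'I_d)
  : {set 'I_m} := [set g in S | f g == j].

Definition minbundle (R : realDomainType) (m d : nat) (v : 'I_m -> R)
  (S : {set 'I_m}) (f : {ffun 'I_m -> 'I_d}) : R :=
  seqmin [seq bval v (bundle S f j) | j <- enum 'I_d].

(* MMS^d_v(S): maximum over all partitions of S into d bundles of the minimum
   bundle value (meaningful for d >= 1). *)
Definition MMS (R : realDomainType) (m : nat) (d : nat) (v : 'I_m -> R)
  (S : {set 'I_m}) : R :=
  seqmax [seq minbundle v S f | f <- enum {ffun 'I_m -> 'I_d}].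

Definition ordered_val (R : realDomainType) (m : nat) (v : 'I_m -> R) : Prop :=
  forall g h : 'I_m, (g <= h)%N -> v h <= v g.

Definition ordered_instance (R : realDomainType) (n m : nat)
  (V : 'I_n -> 'I_m -> R) : Prop :=
  (forall i g, 0 <= V i g) /\ (forall i, ordered_val (V i)).

(* Main.v *)
Require Import Defs.
From HB Require Import structures.
From mathcomp Require Import all_boot all_order all_algebra.
From mathcomp Require Import zify.
Import Order.TTheory GRing.Theory Num.Theory.
Local Open Scope ring_scope.

Section S.
Context {R : realDomainType}.

Lemma foldr_min_le (a : R) l x : x \in a :: l -> foldr Num.min a l <= x.
Proof.
elim: l x => [|b l IH] x /=; first by rewrite inE => /eqP->.
rewrite !inE => /or3P [/eqP->|/eqP->|xl].
- by rewrite ge_min (IH _ (mem_head _ _)) orbT.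
- by rewrite ge_min lexx.
- by rewrite ge_min IH ?orbT // inE xl orbT.
Qed.

Lemma foldr_min_ge (mu a : R) l : mu <= a -> (forall x, x \in l -> mu <= x) ->
  mu <= foldr Num.min a l.
Proof.
move=> ha; elim: l => [|b l IH] H //=.
rewrite le_min H ?mem_head //=; by apply: IH => x xl; apply: H; rewrite inE xl orbT.
Qed.

Lemma seqmin_le (l : seq R) x : x \in l -> seqmin l <= x.
Proof. case: l => // a l xl; exact: foldr_min_le. Qed.

Lemma seqmin_ge (mu : R) l : l != [::] -> (forall x, x \in l -> mu <= x) -> mu <= seqmin l.
Proof.
case: l => // a l _ H; apply: foldr_min_ge; first exact: H (mem_head _ _).
by move=> x xl; apply: H; rewrite inE xl orbT.
Qed.

Lemma foldr_max_ge (a : R) l x : x \in a :: l -> x <= foldr Num.max a l.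
Proof.
elim: l x => [|b l IH] x /=; first by rewrite inE => /eqP->.
rewrite !inE => /or3P [/eqP->|/eqP->|xl].
- by rewrite le_max (IH _ (mem_head _ _)) orbT.
- by rewrite le_max lexx.
- by rewrite le_max IH ?orbT // inE xl orbT.
Qed.

Lemma foldr_max_mem (a : R) l : foldr Num.max a l \in a :: l.
Proof.
elim: l => [|b l IH] /=; first by rewrite mem_head.
case: leP => _; rewrite !inE ?eqxx ?orbT //.
by move: IH; rewrite inE => /orP[->|->]; rewrite ?orbT.
Qed.

Lemma seqmax_ge (l : seq R) x : x \in l -> x <= seqmax l.
Proof. case: l => // a l xl; exact: foldr_max_ge. Qed.

Lemma seqmax_mem (l : seq R) : l != [::] -> seqmax l \in l.
Proof. case: l => // a l _; exact: foldr_max_mem. Qed.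

Lemma bvalE m n (v : 'I_m -> R) (f : {ffun 'I_m -> 'I_n}) b :
  bval v (bundle setT f b) = \sum_g (if f g == b then v g else 0).
Proof. rewrite /bval /bundle big_mkcond /=; apply: eq_bigr => g _; by rewrite !inE. Qed.

Lemma bval_sub m (v : 'I_m -> R) (A B : {set 'I_m}) : (forall g, 0 <= v g) ->
  A \subset B -> bval v A <= bval v B.
Proof.
move=> v0 AB; rewrite /bval [X in _ <= X](big_setID A) /= (setIidPr AB).
by rewrite lerDl sumr_ge0.
Qed.

Lemma sum2 m (h h' : 'I_m -> R) x y : x != y ->
  (forall g, g != x -> g != y -> h g = h' g) -> h x + h y <= h' x + h' y ->
  \sum_g h g <= \sum_g h' g.
Proof.
move=> xy H Hle.
rewrite (bigD1 x) //= [X in _ <= X](bigD1 x) //= (bigD1 y) 1?eq_sym //=.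
rewrite [\sum_(i < m | _) h' i](bigD1 y) 1?eq_sym //= !addrA lerD //.
by rewrite le_eqVlt; apply/orP; left; apply/eqP; apply: eq_bigr => g /andP[gx gy]; apply: H.
Qed.

End S.

Section Swap.
Variable R : realDomainType.
Variables (m n : nat) (v : 'I_m -> R) (k : 'I_n) (mu : R).
Hypothesis v0 : forall g, 0 <= v g.
Hypothesis vord : ordered_val v.

Definition inv (f : {ffun 'I_m -> 'I_n}) :=
  forall b, b != k -> mu <= bval v (bundle setT f b).

Definition swapf (f : {ffun 'I_m -> 'I_n}) (x y : 'I_m) : {ffun 'I_m -> 'I_n} :=
  [ffun g => if g == y then f x else if g == x then f y else f g].

Lemma swap_inv (f : {ffun 'I_m -> 'I_n}) (x y : 'I_m) : f x = k -> f y != k -> (x <= y)%N -> inv f -> inv (swapf f x y).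
Proof.
move=> fx fy xy Hf b bk; apply: le_trans (Hf b bk) _; rewrite !bvalE.
have xny : x != y.
  by apply/eqP => e; move: fy; rewrite -e fx eqxx.
apply: (@sum2 _ _ (fun g => if f g == b then v g else 0)
  (fun g => if swapf f x y g == b then v g else 0) _ _ xny).
  by move=> g gx gy; rewrite ffunE (negbTE gx) (negbTE gy).
rewrite /= !ffunE (negbTE xny) !eqxx fx (eq_sym k) (negbTE bk).
case: eqP => _; last by rewrite addr0.
by rewrite add0r addr0; apply: vord.
Qed.

Lemma swaps_inv (s : seq ('I_m * 'I_m)) : forall f : {ffun 'I_m -> 'I_n}, inv f ->
  (forall p, p \in s -> f p.1 = k) -> (forall p, p \in s -> f p.2 != k) ->
  uniq (unzip1 s) -> uniq (unzip2 s) ->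
  (forall p q, p \in s -> q \in s -> p.1 != q.2) ->
  (forall p, p \in s -> (p.1 <= p.2)%N) ->
  exists f', [/\ inv f', (forall p, p \in s -> f' p.2 = k) &
     (forall g, f g = k -> g \notin unzip1 s -> f' g = k)].
Proof.
elim: s => [|p s IH] f Hf H1 H2 U1 U2 Hc Hle.
  by exists f; split.
move: U1 U2 => /= /andP[p1s U1] /andP[p2s U2].
have Hin : forall q, q \in s -> q \in p :: s by move=> q qs; rewrite inE qs orbT.
have f1 := @swap_inv f p.1 p.2 (H1 p (mem_head _ _)) (H2 p (mem_head _ _)) (Hle p (mem_head _ _)) Hf.
have [q1 q2 q12] : [/\ forall q, q \in s -> q.1 != p.1, forall q, q \in s -> q.2 != p.2 &
   forall q, q \in s -> (q.1 != p.2) && (q.2 != p.1)].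
  split=> q qs.
  - by apply: contraNneq p1s => <-; apply: map_f.
  - by apply: contraNneq p2s => <-; apply: map_f.
  - rewrite (Hc q p (Hin _ qs) (mem_head _ _)) /= eq_sym.
    exact: (Hc p q (mem_head _ _) (Hin _ qs)).
have H1' : forall q, q \in s -> swapf f p.1 p.2 q.1 = k.
  move=> q qs; have /andP[a b] := q12 q qs.
  by rewrite ffunE (negbTE a) (negbTE (q1 q qs)) H1 ?Hin.
have H2' : forall q, q \in s -> swapf f p.1 p.2 q.2 != k.
  move=> q qs; have /andP[a b] := q12 q qs.
  by rewrite ffunE (negbTE (q2 q qs)) (negbTE b) H2 ?Hin.
have Hc' : forall q r, q \in s -> r \in s -> q.1 != r.2.
  by move=> q r qs rs; apply: Hc; apply: Hin.
have Hle' : forall q, q \in s -> (q.1 <= q.2)%N.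
  by move=> q qs; apply: Hle; apply: Hin.
have [f' [Hf' A B]] := IH (swapf f p.1 p.2) f1 H1' H2' U1 U2 Hc' Hle'.
exists f'; split=> //.
- move=> q; rewrite inE => /orP[/eqP->|qs]; last exact: A.
  apply: B; first by rewrite ffunE eqxx H1 ?mem_head.
  apply/mapP => -[r rs e]; have /andP[a _] := q12 r rs; by rewrite e eqxx in a.
- move=> g fg; rewrite /= inE negb_or => /andP[gp gs]; apply: B => //.
  rewrite ffunE (negbTE gp); case: eqP => [e|_ //].
  by have := H2 p (mem_head _ _); rewrite -e fg eqxx.
Qed.

End Swap.
Arguments inv {R m n} v k mu f.
Arguments swaps_inv {R m n} v k mu.

Lemma hall m (X Y : {set 'I_m}) :
  (forall t, #|[set y in Y | (y <= t)%N]| <= #|[set x in X | (x <= t)%N]|)%N ->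
  exists s : seq ('I_m * 'I_m), [/\ uniq (unzip1 s), uniq (unzip2 s),
    {subset unzip1 s <= X}, Y =i unzip2 s & all (fun p : 'I_m * 'I_m => (p.1 <= p.2)%N) s].
Proof.
move: {2}#|Y| (erefl #|Y|) => N; elim: N X Y => [|N IH] X Y HN H.
  by exists [::]; split=> // y; rewrite (cards0_eq HN) inE.
have [y1 y1Y] : exists y, y \in Y.
  by apply/set0Pn; rewrite -card_gt0 HN.
case: (arg_minnP (fun y : 'I_m => nat_of_ord y) y1Y) => y0 y0Y' y0min.
have y0Y : y0 \in Y := y0Y'.
have : (0 < #|[set x in X | (x <= y0)%N]|)%N.
  apply: leq_trans (H y0); rewrite card_gt0; apply/set0Pn; exists y0.
  by rewrite inE y0Y leqnn.
rewrite card_gt0 => /set0Pn [x1]; rewrite inE => /andP[x1X x1y0].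
case: (arg_minnP (fun x : 'I_m => nat_of_ord x) x1X) => x0 x0X' x0min.
have x0X : x0 \in X := x0X'.
have x0y0 : (x0 <= y0)%N := leq_trans (x0min _ x1X) x1y0.
have HN' : #|Y :\ y0| = N.
  by move: HN; rewrite (cardsD1 y0) y0Y add1n => -[].
have H' : forall t, (#|[set y in Y :\ y0 | (y <= t)%N]| <= #|[set x in X :\ x0 | (x <= t)%N]|)%N.
  move=> t; case: (ltnP t y0) => ty.
    suff -> : #|[set y in Y :\ y0 | (y <= t)%N]| = 0%N by [].
    apply/eqP; rewrite cards_eq0; apply/eqP/setP => y; rewrite !inE; apply/negP.
    case/andP => /andP[_ yY] yt; have := y0min _ yY; lia.
  have e1 : [set y in Y :\ y0 | (y <= t)%N] = [set y in Y | (y <= t)%N] :\ y0.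
    by apply/setP => y; rewrite !inE andbA.
  have e2 : [set x in X :\ x0 | (x <= t)%N] = [set x in X | (x <= t)%N] :\ x0.
    by apply/setP => y; rewrite !inE andbA.
  have := H t; rewrite e1 e2 (cardsD1 y0 [set y in Y | _]) (cardsD1 x0 [set x in X | _]).
  by rewrite !inE y0Y x0X ty (leq_trans x0y0 ty) /= leq_add2l.
have [s [U1 U2 S1 EY A]] := IH (X :\ x0) (Y :\ y0) HN' H'.
exists ((x0, y0) :: s); split => /=.
- rewrite U1 andbT; apply/negP => /S1; by rewrite !inE eqxx.
- by rewrite U2 andbT -EY !inE eqxx.
- move=> x; rewrite inE => /orP[/eqP->//|/S1]; by rewrite !inE => /andP[_ ->].
- move=> y; rewrite inE -EY !inE; case: eqP => [->|] //=.
- by rewrite x0y0 A.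
Qed.

Lemma dissolve (R : realDomainType) m n' (v : 'I_m -> R) (k : 'I_n'.+2) (mu : R)
  (f : {ffun 'I_m -> 'I_n'.+2}) (G : {set 'I_m}) :
  (forall g, 0 <= v g) -> inv v k mu f -> (forall g, g \in G -> f g = k) ->
  mu <= MMS n'.+1 v (setT :\: G).
Proof.
move=> v0 Hf HG.
pose f' : {ffun 'I_m -> 'I_n'.+1} := [ffun g => odflt ord0 (unlift k (f g))].
have Hm : minbundle v (setT :\: G) f' \in
   [seq minbundle v (setT :\: G) f | f <- enum {ffun 'I_m -> 'I_n'.+1}].
  by apply: (map_f (fun f => minbundle v _ f)); rewrite mem_enum.
apply: le_trans _ (seqmax_ge _ _ Hm).
rewrite /minbundle; apply: seqmin_ge.
  by rewrite -size_eq0 size_map size_enum_ord.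
move=> x /mapP[j _ ->].
have bk : lift k j != k by rewrite eq_sym neq_lift.
apply: le_trans (Hf _ bk) _; apply: bval_sub => //.
apply/subsetP => g; rewrite !inE /= => /eqP fg.
have gG : g \notin G by apply/negP => /HG; rewrite fg => e; move: bk; rewrite e eqxx.
by rewrite gG /= ffunE fg liftK.
Qed.

Lemma card_between m (t L : nat) : (#|[set x : 'I_m | (t < x <= L)%N]| <= L - t)%N.
Proof.
rewrite cardE -(size_map val) -(size_iota t.+1 (L - t)).
apply: uniq_leq_size; first by rewrite map_inj_uniq ?enum_uniq //; apply: val_inj.
move=> x /mapP[y]; rewrite mem_enum inE => /andP[ty yL] ->.
rewrite mem_iota; change (t < nat_of_ord y < t.+1 + (L - t))%N; lia.
Qed.

Lemma card_le_L m (L : nat) : (L < m)%N -> (L.+1 <= #|[set x : 'I_m | (x <= L)%N]|)%N.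
Proof.
move=> Lm.
have inj : injective (fun i : 'I_L.+1 => widen_ord Lm i).
  by move=> a b /(congr1 val) /= e; apply: val_inj.
rewrite -[X in (X <= _)%N]card_ord -cardsT -(card_imset _ inj).
apply: subset_leq_card; apply/subsetP => x /imsetP[i _ ->].
by rewrite inE /= -ltnS ltn_ord.
Qed.

Lemma core (R : realDomainType) m n' (v : 'I_m -> R) (G : {set 'I_m}) (K L : nat) :
  (forall g, 0 <= v g) -> ordered_val v ->
  (L < m)%N -> (n'.+2 * K.-1 < L.+1)%N ->
  (forall t, #|[set g in G | (g <= t)%N]| <= K - (L - t))%N ->
  MMS n'.+2 v setT <= MMS n'.+1 v (setT :\: G).
Proof.
move=> v0 vord Lm Hpig HG.
set l := [seq minbundle v setT f | f <- enum {ffun 'I_m -> 'I_n'.+2}].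
have lne : l != [::].
  have : minbundle v setT ([ffun _ => ord0] : {ffun 'I_m -> 'I_n'.+2}) \in l.
    by apply: (map_f (fun f => minbundle v _ f)); rewrite mem_enum.
  by case: (l).
have /mapP [f0 _ e] := seqmax_mem _ lne.
rewrite /MMS -/l e.
set mu := minbundle v setT f0.
have Hinv : forall k, inv v k mu f0.
  move=> k b _; apply: seqmin_le; apply: (map_f (fun j => bval v (bundle setT f0 j))).
  by rewrite mem_enum.
have [k hk] : exists k : 'I_n'.+2, (K <= #|[set x : 'I_m | (x <= L)%N & f0 x == k]|)%N.
  case: (boolP [exists k : 'I_n'.+2, (K <= #|[set x : 'I_m | (x <= L)%N & f0 x == k]|)%N]).
    by move/existsP.
  rewrite negb_exists => /forallP Hall; exfalso.
  have Hs : #|[set x : 'I_m | (x <= L)%N]| =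
      (\sum_(k < n'.+2) #|[set x : 'I_m | (x <= L)%N & f0 x == k]|)%N.
    rewrite -sum1_card (partition_big f0 xpredT) //=.
    apply: eq_bigr => j _; rewrite sum1dep_card; apply: eq_card => x; by rewrite !inE.
  have : (\sum_(k < n'.+2) #|[set x : 'I_m | (x <= L)%N & f0 x == k]| <= \sum_(k < n'.+2) K.-1)%N.
    apply: leq_sum => j _; have := Hall j; rewrite -ltnNge; lia.
  rewrite -Hs sum_nat_const card_ord => H1.
  have := @card_le_L m L Lm; lia.
set P := [set x : 'I_m | f0 x == k].
set X := P :\: G.
set Y := G :\: P.
have cP : forall t, (K - (L - t) <= #|[set x in P | (x <= t)%N]|)%N.
  move=> t.
  have sub : [set x : 'I_m | (x <= L)%N & f0 x == k] \subset
      [set x in P | (x <= t)%N] :|: [set x : 'I_m | (t < x <= L)%N].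
    apply/subsetP => x; rewrite !inE => /andP[xL ->] /=.
    by case: (leqP x t) => //= ->.
  have := subset_leq_card sub; rewrite cardsU.
  have := card_between m t L; lia.
have dom : forall t, (#|[set y in Y | (y <= t)%N]| <= #|[set x in X | (x <= t)%N]|)%N.
  move=> t.
  have E1 := cardsID P [set y in G | (y <= t)%N].
  have E2 := cardsID G [set x in P | (x <= t)%N].
  have e1 : [set y in G | (y <= t)%N] :&: P = [set x in P | (x <= t)%N] :&: G.
    apply/setP => y; rewrite !inE.
    by case: (y \in G) (f0 y == k) (y <= t)%N => [] [] [].
  have e2 : [set y in G | (y <= t)%N] :\: P = [set y in Y | (y <= t)%N].
    apply/setP => y; rewrite !inE.
    by case: (y \in G) (f0 y == k) (y <= t)%N => [] [] [].
  have e3 : [set y in P | (y <= t)%N] :\: G = [set y in X | (y <= t)%N].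
    apply/setP => y; rewrite !inE.
    by case: (y \in G) (f0 y == k) (y <= t)%N => [] [] [].
  move: E1 E2; rewrite e1 e2 e3.
  set I := [set x in P | (x <= t)%N] :&: G.
  move=> E1 E2.
  have E1' : (#|I| + #|[set y in Y | (y <= t)%N]| = #|[set g in G | (g <= t)%N]|)%N := E1.
  have E2' : (#|I| + #|[set y in X | (y <= t)%N]| = #|[set x in P | (x <= t)%N]|)%N := E2.
  have := HG t; have := cP t; lia.
have [s [U1 U2 S1 EY A]] := @hall m X Y dom.
have XP : forall x, x \in X -> f0 x = k by move=> x; rewrite !inE => /andP[_ /eqP].
have XG : forall x, x \in X -> x \notin G by move=> x; rewrite !inE => /andP[].
have YP : forall y, y \in Y -> f0 y != k by move=> y; rewrite !inE => /andP[].
have H1 : forall p, p \in s -> f0 p.1 = k.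
  by move=> p ps; apply: XP; apply: S1; apply: map_f.
have H2 : forall p, p \in s -> f0 p.2 != k.
  by move=> p ps; apply: YP; rewrite EY; apply: map_f.
have Hc : forall p q, p \in s -> q \in s -> p.1 != q.2.
  move=> p q ps qs; apply/eqP => epq.
  by have := H2 q qs; rewrite -epq (H1 p ps) eqxx.
have Hle : forall p, p \in s -> (p.1 <= p.2)%N.
  by move=> p ps; move/allP: A => /(_ p ps).
have [f' [Hf' B C]] := swaps_inv v k mu vord s f0 (Hinv k) H1 H2 U1 U2 Hc Hle.
apply: (dissolve _ _ _ _ _ _ _ _ v0 Hf') => g gG.
case: (boolP (f0 g == k)) => [/eqP fg|fg].
  apply: C => //; apply/negP => /S1; by rewrite !inE gG /= ?andbF.
have : g \in Y by rewrite !inE gG fg.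
rewrite EY => /mapP[p ps ->]; exact: B.
Qed.

Lemma cardG m (G : {set 'I_m}) (s : seq 'I_m) t : G =i s ->
  (#|[set g in G | (g <= t)%N]| <= count (fun g : 'I_m => (g <= t)%N) s)%N.
Proof.
move=> Gs; rewrite -size_filter; apply: leq_trans (card_size _).
apply: subset_leq_card; apply/subsetP => g; rewrite !inE mem_filter Gs.
by case/andP => -> ->.
Qed.

Theorem lemma15 (R : realDomainType) (n m : nat) (V : 'I_n -> 'I_m -> R)
  (i : 'I_n) :
  (2 <= n)%N -> ordered_instance V ->
  (forall g1 g2 g3 : 'I_m,
      (2 * n - 1 <= g1.+1)%N -> (2 * n <= g2.+1)%N -> (2 * n + 1 <= g3.+1)%N ->
      g1 != g2 -> g1 != g3 -> g2 != g3 ->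
      MMS n (V i) [set: 'I_m] <=
      MMS n.-1 (V i) ([set: 'I_m] :\: [set g1; g2; g3]))
  /\
  (forall g1 g2 g3 g4 : 'I_m,
      (3 * n - 2 <= g1.+1)%N -> (3 * n - 1 <= g2.+1)%N ->
      (3 * n <= g3.+1)%N -> (3 * n + 1 <= g4.+1)%N ->
      g1 != g2 -> g1 != g3 -> g1 != g4 -> g2 != g3 -> g2 != g4 -> g3 != g4 ->
      MMS n (V i) [set: 'I_m] <=
      MMS n.-1 (V i) ([set: 'I_m] :\: [set g1; g2; g3; g4])).
Proof.
case: n V i => [|[|n']] V i //= _ [V0 Vord].
split.
- move=> g1 g2 g3 h1 h2 h3 _ _ _.
  apply: (@core _ _ _ _ _ 3 (2 * n'.+2)) => //.
  + have := ltn_ord g3; lia.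
  + lia.
  + move=> t; apply: leq_trans (@cardG _ _ [:: g1; g2; g3] t _) _.
      by move=> g; rewrite !inE -!orbA.
    rewrite /=; case: (leqP g1 t); case: (leqP g2 t); case: (leqP g3 t); lia.
- move=> g1 g2 g3 g4 h1 h2 h3 h4 _ _ _ _ _ _.
  apply: (@core _ _ _ _ _ 4 (3 * n'.+2)) => //.
  + have := ltn_ord g4; lia.
  + lia.
  + move=> t; apply: leq_trans (@cardG _ _ [:: g1; g2; g3; g4] t _) _.
      by move=> g; rewrite !inE -!orbA.
    rewrite /=; case: (leqP g1 t); case: (leqP g2 t); case: (leqP g3 t);
      case: (leqP g4 t); lia.
Qed.
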